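(* In every Choi-defined resource theory, for every system $A$ the maximally mixed state $\frac{1}{d_A}\mathbb{1}_A$ is a free state.
   Context: A quantum resource theory specifies, for all finite-dimensional systems, a set of free channels containing the identity, swap and discarding (partial trace) channels and closed under sequential and parallel composition; free states are those preparable by free channels, and the family of free states is closed under tensor product, partial trace and system swaps. For a channel $\mathcal{M}_{A\to B}$ its renormalized Choi matrix is $\frac{1}{d_A}(\mathcal{M}_{A\to B}\otimes\mathcal{I}_{A'})(\Phi_{AA'})$, where $A'$ is a copy of $A$, $d_A=\dim A$ and $\Phi_{AA'}=\sum_{x,y}|x\rangle\langle y|_A\otimes|x\rangle\langle y|_{A'}$ for a fixed orthonormal basis. A Choi-defined resource theory (CDRT) is a resource theory in which a channel is free if and only if its renormalized Choi matrix is a free state. *)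

(* Defs.v *)
From HB Require Import structures.
From mathcomp Require Import all_boot all_order all_algebra.
Set Implicit Arguments. Unset Strict Implicit. Unset Printing Implicit Defensive.
Import Order.TTheory GRing.Theory Num.Theory.
Local Open Scope ring_scope.

Section Quantum.
Variable C : numClosedFieldType.

(* A system is identified with its (positive) dimension; the composite system
   AB of dimensions m, n has dimension m * n, with basis |i>|k> indexed by
   mxvec_index i k. *)

Definition tens m1 n1 m2 n2 (A : 'M[C]_(m1, n1)) (B : 'M[C]_(m2, n2))
  : 'M[C]_(m1 * m2, n1 * n2) :=
  \sum_(i < m1) \sum_(j < n1) \sum_(k < m2) \sum_(l < n2)
     (A i j * B k l) *: delta_mx (mxvec_index i k) (mxvec_index j l).

Definition psd n (X : 'M[C]_n) : Prop :=
  forall v : 'cV[C]_n, 0 <= ((map_mx Num.conj v)^T *m X *m v) 0 0.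

Definition is_state n (X : 'M[C]_n) : Prop := psd X /\ \tr X = 1.

Definition tensmap m1 n1 m2 n2 (f : 'M[C]_m1 -> 'M[C]_n1)
  (g : 'M[C]_m2 -> 'M[C]_n2) (X : 'M[C]_(m1 * m2)) : 'M[C]_(n1 * n2) :=
  \sum_(i < m1) \sum_(j < m1) \sum_(k < m2) \sum_(l < m2)
     X (mxvec_index i k) (mxvec_index j l) *:
       tens (f (delta_mx i j)) (g (delta_mx k l)).

Definition is_channel m n (f : 'M[C]_m -> 'M[C]_n) : Prop :=
  [/\ (forall (a : C) (X Y : 'M[C]_m), f (a *: X + Y) = a *: f X + f Y),
      (forall k (X : 'M[C]_(m * k)),
          psd X -> psd (tensmap f (fun Y : 'M[C]_k => Y) X))
    & (forall X : 'M[C]_m, \tr (f X) = \tr X)].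

Definition swapch m n (X : 'M[C]_(m * n)) : 'M[C]_(n * m) :=
  \sum_(i < m) \sum_(j < m) \sum_(k < n) \sum_(l < n)
     X (mxvec_index i k) (mxvec_index j l) *:
       delta_mx (mxvec_index k i) (mxvec_index l j).

Definition ptrace2 m n (X : 'M[C]_(m * n)) : 'M[C]_m :=
  \matrix_(i, j) \sum_(k < n) X (mxvec_index i k) (mxvec_index j k).
Definition ptrace1 m n (X : 'M[C]_(m * n)) : 'M[C]_n :=
  \matrix_(k, l) \sum_(i < m) X (mxvec_index i k) (mxvec_index i l).

(* renormalized Choi matrix (1/d_A) (M ⊗ I_{A'})(Φ_{AA'}) on B ⊗ A' *)
Definition choi m n (f : 'M[C]_m -> 'M[C]_n) : 'M[C]_(n * m) :=
  (m%:R)^-1 *: \sum_(x < m) \sum_(y < m) tens (f (delta_mx x y)) (delta_mx x y).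

Section RT.
Variable free : forall m n, ('M[C]_m -> 'M[C]_n) -> Prop.

Definition free_state_of n (rho : 'M[C]_n) : Prop :=
  exists f : 'M[C]_1 -> 'M[C]_n, free f /\ rho = f 1%:M.
End RT.

Record resource_theory := ResourceTheory {
  free : forall m n, ('M[C]_m -> 'M[C]_n) -> Prop;
  free_is_channel : forall m n (f : 'M[C]_m -> 'M[C]_n),
      (0 < m)%N -> (0 < n)%N -> free f -> is_channel f;
  free_id : forall m, (0 < m)%N -> free (fun X : 'M[C]_m => X);
  free_swap : forall m n, (0 < m)%N -> (0 < n)%N -> free (@swapch m n);
  free_ptrace2 : forall m n, (0 < m)%N -> (0 < n)%N -> free (@ptrace2 m n);
  free_ptrace1 : forall m n, (0 < m)%N -> (0 < n)%N -> free (@ptrace1 m n);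
  free_comp : forall m n p (f : 'M[C]_m -> 'M[C]_n) (g : 'M[C]_n -> 'M[C]_p),
      (0 < m)%N -> (0 < n)%N -> (0 < p)%N -> free f -> free g -> free (fun X => g (f X));
  free_tens : forall m1 n1 m2 n2 (f : 'M[C]_m1 -> 'M[C]_n1)
      (g : 'M[C]_m2 -> 'M[C]_n2),
      (0 < m1)%N -> (0 < n1)%N -> (0 < m2)%N -> (0 < n2)%N ->
      free f -> free g -> free (tensmap f g);
  free_state_tens : forall m n (rho : 'M[C]_m) (sigma : 'M[C]_n),
      (0 < m)%N -> (0 < n)%N -> free_state_of free rho -> free_state_of free sigma ->
      free_state_of free (tens rho sigma);
  free_state_ptrace2 : forall m n (rho : 'M[C]_(m * n)), (0 < m)%N -> (0 < n)%N ->
      free_state_of free rho -> free_state_of free (ptrace2 rho);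
  free_state_ptrace1 : forall m n (rho : 'M[C]_(m * n)), (0 < m)%N -> (0 < n)%N ->
      free_state_of free rho -> free_state_of free (ptrace1 rho);
  free_state_swap : forall m n (rho : 'M[C]_(m * n)), (0 < m)%N -> (0 < n)%N ->
      free_state_of free rho -> free_state_of free (swapch rho)
}.

Definition free_state (RT : resource_theory) n (rho : 'M[C]_n) : Prop :=
  free_state_of (free RT) rho.

Definition is_CDRT (RT : resource_theory) : Prop :=
  forall m n (f : 'M[C]_m -> 'M[C]_n), (0 < m)%N -> (0 < n)%N -> is_channel f ->
    (free RT f <-> free_state RT (choi f)).

End Quantum.

(* Main.v *)
Require Import Defs.
From HB Require Import structures.
From mathcomp Require Import all_boot all_order all_algebra.
Import Order.TTheory GRing.Theory Num.Theory.
Local Open Scope ring_scope.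

Lemma mxvec_index_eq m n (i i' : 'I_m) (k k' : 'I_n) :
  (mxvec_index i k == mxvec_index i' k') = (i == i') && (k == k').
Proof.
apply/eqP/andP => [|[/eqP-> /eqP->] //].
rewrite /mxvec_index => /cast_ord_inj/enum_rank_inj [-> ->]; by split.
Qed.

Lemma sum_if (C : numClosedFieldType) n (i : 'I_n) (F : 'I_n -> C) :
  \sum_(i' < n) (if i' == i then F i' else 0) = F i.
Proof.
rewrite (bigD1 i) //= eqxx big1 ?addr0 // => j /negbTE -> //.
Qed.

Lemma tensE (C : numClosedFieldType) m1 n1 m2 n2 (A : 'M[C]_(m1, n1)) (B : 'M[C]_(m2, n2)) i j k l :
  tens A B (mxvec_index i k) (mxvec_index j l) = A i j * B k l.
Proof.
rewrite /tens !summxE.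
have H : forall i' j' k' l',
  ((A i' j' * B k' l') *: delta_mx (mxvec_index i' k') (mxvec_index j' l'))
     (mxvec_index i k) (mxvec_index j l) =
  if i' == i then if j' == j then if k' == k then if l' == l then A i' j' * B k' l'
  else 0 else 0 else 0 else 0.
  move=> i' j' k' l'; rewrite !mxE !mxvec_index_eq.
  rewrite [i == i']eq_sym [j == j']eq_sym [k == k']eq_sym [l == l']eq_sym.
  by case: (i' == i); case: (j' == j); case: (k' == k); case: (l' == l);
     rewrite /= ?mulr1 ?mulr0.
under eq_bigr => i' _ do rewrite summxE.
under eq_bigr => i' _ do under eq_bigr => j' _ do rewrite summxE.
under eq_bigr => i' _ do under eq_bigr => j' _ do under eq_bigr => k' _ do
  rewrite summxE.
under eq_bigr => i' _ do under eq_bigr => j' _ do under eq_bigr => k' _ do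
  under eq_bigr => l' _ do rewrite H.
rewrite -(@sum_if _ _ i (fun i' => A i j * B k l)).
apply: eq_bigr => i' _; case: eqP => [->|_]; last first.
  by rewrite !big1.
rewrite -(@sum_if _ _ j (fun _ => A i j * B k l)).
apply: eq_bigr => j' _; case: eqP => [->|_]; last by rewrite !big1.
rewrite -(@sum_if _ _ k (fun _ => A i j * B k l)).
apply: eq_bigr => k' _; case: eqP => [->|_]; last by rewrite !big1.
rewrite -(@sum_if _ _ l (fun _ => A i j * B k l)).
by apply: eq_bigr => l' _; case: eqP => [->|_].
Qed.

Theorem corollary1 (C : numClosedFieldType) (RT : resource_theory C) :
  is_CDRT RT ->
  forall n : nat, (0 < n)%N -> free_state RT ((n%:R)^-1 *: (1%:M : 'M[C]_n)).
Proof.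
move=> cdrt n n0.
have fid := free_id RT n0.
have cid := free_is_channel n0 n0 fid.
have := (cdrt _ _ _ n0 n0 cid).1 fid => fs.
have := free_state_ptrace2 n0 n0 fs.
congr (free_state_of _ _).
apply/matrixP => i j; rewrite !mxE.
under eq_bigr => k _ do rewrite mxE summxE.
under eq_bigr => k _ do under eq_bigr => x _ do rewrite summxE.
under eq_bigr => k _ do under eq_bigr => x _ do under eq_bigr => y _ do
  rewrite tensE !mxE.
rewrite -mulr_sumr; congr (_ * _).
have E : forall (a b : 'I_n), \sum_(x < n) ((a == x)%:R : C) * (b == x)%:R = (a == b)%:R.
  move=> a b; rewrite (bigD1 a) //= eqxx mul1r [X in _ + X]big1 ?addr0 ?[b == a]eq_sym // => x xa.
  by rewrite eq_sym (negbTE xa) mul0r.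
have E2 : forall k : 'I_n, \sum_(x < n) \sum_(y < n)
    (((i == x) && (j == y))%:R * ((k == x) && (k == y))%:R : C) =
    (i == k)%:R * (j == k)%:R.
  move=> k; rewrite (bigD1 i) //= [X in _ + X]big1 ?addr0; last first.
    move=> x xi; apply: big1 => y _.
    by rewrite eq_sym (negbTE xi) /= mul0r.
  rewrite eqxx /=.
  rewrite -(E j k) mulr_sumr.
  apply: eq_bigr => y _.
  by rewrite [i == k]eq_sym [j == y]eq_sym; case: (y == j); case: (k == i); case: (k == y);
    rewrite /= ?mulr1 ?mulr0 ?mul0r ?mul1r.
under eq_bigr => k _ do rewrite E2.
rewrite -(E i j); apply: eq_bigr => k _; by rewrite [j == k]eq_sym.
Qed.
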